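(* Let $(H,L_H)$ be a right-resolving and follower-separated labeled graph. Then $L_H$ is injective on the set $\mathcal R(L_H)$ of regular rays in $X_H$.
   Context: A labeled graph $(H,L_H)$: finite directed graph (vertices $V_H$, edges $E_H$, source/terminal maps $s_H,t_H$) without sinks or sources, labeling $L_H:E_H\to A$, edge shift $X_H$; $L_H$ acts coordinatewise, giving $L_H:X_H\to Y=L_H(X_H)$. Right-resolving: distinct edges with the same source have distinct labels. $f_H(v)=\{L_H(x): x$ a right-infinite path starting at $v\}$; follower-separated: $f_H(v)=f_H(w)$ implies $v=w$. For $x\in X_H$, $\mathbb U(x)=\{z\in X_H:\exists N\ \forall i\le N,\ z_i=x_i\}$ and similarly in $Y$; $x$ is a regular ray if $L_H$ maps $\mathbb U(x)$ onto $\mathbb U(L_H(x))$; $\mathcal R(L_H)$ is the set of regular rays. *)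

(* Defs.v *)
From mathcomp Require Import all_boot all_order all_algebra.
Set Implicit Arguments. Unset Strict Implicit. Unset Printing Implicit Defensive.
Import Order.TTheory GRing.Theory Num.Theory.
Local Open Scope ring_scope.

Record lgraph (A : Type) := LGraph {
  V : finType;
  E : finType;
  src : E -> V;
  tgt : E -> V;
  lab : E -> A }.

Section LGraphDefs.
Variables (A : Type) (H : lgraph A).

Definition no_sinks : Prop := forall v : V H, exists e : E H, src e = v.
Definition no_sources : Prop := forall v : V H, exists e : E H, tgt e = v.

Definition right_resolving : Prop :=
  forall e e' : E H, src e = src e' -> e <> e' -> lab e <> lab e'.

Definition edge_shift (x : int -> E H) : Prop :=
  forall i : int, tgt (x i) = src (x (i + 1)).

Definition Lmap (x : int -> E H) : int -> A := fun i => lab (x i).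

Definition label_shift (y : int -> A) : Prop :=
  exists x, edge_shift x /\ Lmap x = y.

Definition follower (v : V H) : (nat -> A) -> Prop :=
  fun w => exists p : nat -> E H,
    src (p 0%N) = v /\ (forall n : nat, tgt (p n) = src (p n.+1)) /\
    w = (fun n => lab (p n)).

Definition follower_separated : Prop :=
  forall v w : V H, follower v = follower w -> v = w.

Definition UX (x : int -> E H) : (int -> E H) -> Prop :=
  fun z => edge_shift z /\ exists N : int, forall i : int, i <= N -> z i = x i.
Definition UY (y : int -> A) : (int -> A) -> Prop :=
  fun w => label_shift w /\ exists N : int, forall i : int, i <= N -> w i = y i.

Definition regular_ray (x : int -> E H) : Prop :=
  edge_shift x /\
  (forall z, UX x z -> UY (Lmap x) (Lmap z)) /\
  (forall w, UY (Lmap x) w -> exists z, UX x z /\ Lmap z = w).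

End LGraphDefs.

(* Main.v *)
Require Import Defs.
From mathcomp Require Import all_boot all_order all_algebra.
From mathcomp Require Import zify.
From Stdlib Require Import FunctionalExtensionality PropExtensionality.
Import Order.TTheory GRing.Theory Num.Theory.
Local Open Scope ring_scope.

Lemma rr_eq (A : Type) (H : lgraph A) : right_resolving H ->
  forall e e' : E H, src e = src e' -> lab e = lab e' -> e = e'.
Proof.
move=> rr e e' hs hl; case: (eqVneq e e') => // /eqP hne.
by case: (rr e e' hs hne hl).
Qed.

Lemma agree_up (A : Type) (H : lgraph A) : right_resolving H ->
  forall (z x : int -> E H) (N M : int), edge_shift z -> edge_shift x ->
  (forall k, k <= N -> z k = x k) ->
  (forall j, j <= M -> lab (z j) = lab (x j)) ->
  forall j, j <= M -> z j = x j.
Proof.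
move=> rr z x N M ez ex hN hl.
have key : forall n : nat, N + n%:Z <= M -> z (N + n%:Z) = x (N + n%:Z).
  elim=> [|n IH] h.
    by rewrite addr0 hN.
  have e1 : N + n.+1%:Z = (N + n%:Z) + 1 by lia.
  rewrite e1; apply: (@rr_eq _ H rr).
    rewrite -ez -ex IH //; lia.
  apply: hl; lia.
move=> j hj; case: (lerP j N) => hjN; first by apply: hN.
have -> : j = N + ((absz (j - N)%R))%:Z by lia.
apply: key; lia.
Qed.

Lemma fol_sub (A : Type) (H : lgraph A) : right_resolving H ->
  forall x x' : int -> E H,
    regular_ray x -> regular_ray x' -> Lmap x = Lmap x' ->
  forall i w, follower (src (x i)) w -> follower (src (x' i)) w.
Proof.
move=> rr x x' [ex [rx1 _]] [ex' [_ rx'3]] hL i w [p [p0 [pe ->]]].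
pose z := fun j : int => if j < i then x j else p (absz (j - i)%R).
have ez : edge_shift z.
  move=> j; rewrite /z.
  case: (ltrP (j + 1) i) => h1.
    have -> : j < i by lia.
    exact: ex.
  case: (ltrP j i) => h2.
    have -> : (absz (j + 1 - i)%R) = 0%N by lia.
    by rewrite ex p0; congr (src (x _)); lia.
  have -> : (absz (j + 1 - i)%R) = ((absz (j - i)%R)).+1 by lia.
  exact: pe.
have uz : UX x z.
  split=> //; exists (i - 1) => k hk; rewrite /z.
  by have -> : k < i by lia.
have [_ [N' hN']] := rx1 z uz.
have [z' [[ez' [N hN]] hz']] := rx'3 (Lmap z) (eq_ind _ (fun f => UY H f (Lmap z)) (rx1 z uz) _ hL).
have lz : forall j, lab (z' j) = lab (z j).
  by move=> j; have := congr1 (fun f => f j) hz'.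
have ag := @agree_up _ H rr z' x' N (i - 1) ez' ex' hN.
have ag' : z' (i - 1) = x' (i - 1).
  apply: ag; last by [].
  move=> j hj; rewrite lz /z.
  have -> : j < i by lia.
  by have := congr1 (fun f => f j) hL.
exists (fun n : nat => z' (i + n%:Z)); split.
  have -> : i + 0%:Z = (i - 1) + 1 by lia.
  by rewrite -ez' ag' ex'; congr (src (x' _)); lia.
split.
  move=> n; rewrite ez'; congr (src (z' _)); lia.
apply: functional_extensionality => n.
rewrite lz /z.
have -> : (i + n%:Z < i) = false by lia.
by have -> : (absz (i + n%:Z - i)%R) = n by lia.
Qed.

Theorem lemma2p8 (A : Type) (H : lgraph A) :
  no_sinks H -> no_sources H ->
  right_resolving H -> follower_separated H ->
  forall x x' : int -> E H,
    regular_ray x -> regular_ray x' -> Lmap x = Lmap x' -> x = x'.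
Proof.
move=> _ _ rr fs x x' rx rx' hL.
apply: functional_extensionality => i.
apply: (@rr_eq _ H rr); last by have := congr1 (fun f => f i) hL.
apply: fs; apply: functional_extensionality => w.
apply: propositional_extensionality; split.
  move=> hw; exact: (@fol_sub _ H rr x x' rx rx' hL i w hw).
move=> hw; exact: (@fol_sub _ H rr x' x rx' rx (esym hL) i w hw).
Qed.
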